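(* Let $d>0$, let $I\subseteq\mathbb{R}$ be a nonempty, non-singleton interval with $\ell(I)\geq d$, and let $f: I\to\mathbb{R}$ be bounded from below. Then the function $\widetilde{f}: I\to\mathbb{R}$ defined by $$\widetilde{f}(x):=\min\Big\{f(x),\ \inf_{t\in[x+d,\infty[\cap I}f(t)\Big\}\qquad(x\in I)$$ is the greatest $d$-periodically increasing minorant of $f$; that is, $\widetilde{f}\leq f$, $\widetilde{f}$ is $d$-periodically increasing, and every $d$-periodically increasing $g: I\to\mathbb{R}$ with $g\leq f$ satisfies $g\leq\widetilde{f}$.
   Context: $\ell(I)$ denotes the length of $I$. A function $f: I\to\mathbb{R}$ is $d$-periodically increasing if $f(x)\leq f(y)$ for all $x,y\in I$ with $y-x\geq d$. The infimum over the empty set is $+\infty$. *)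

(* Defs.v *)
From Stdlib Require Import Reals.
From Coquelicot Require Import Coquelicot.
Open Scope R_scope.

Definition is_interval (I : R -> Prop) : Prop :=
  forall x y z, I x -> I z -> x <= y <= z -> I y.

Definition nondegenerate (I : R -> Prop) : Prop :=
  exists a b, I a /\ I b /\ a < b.

(* length ell(I) = sup { b - a | a, b in I } (possibly +oo); ell(I) >= d. *)
Definition length_ge (I : R -> Prop) (d : R) : Prop :=
  forall L, L < d -> exists a b, I a /\ I b /\ b - a > L.

Definition bounded_below_on (I : R -> Prop) (f : R -> R) : Prop :=
  exists m, forall x, I x -> m <= f x.

Definition d_periodically_increasing (I : R -> Prop) (d : R) (f : R -> R) : Prop :=
  forall x y, I x -> I y -> y - x >= d -> f x <= f y.

(* inf_{t in [x+d, oo[ cap I} f t, in Rbar (p_infty if the set is empty). *)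
Definition tail_inf (I : R -> Prop) (d : R) (f : R -> R) (x : R) : Rbar :=
  Glb_Rbar (fun v => exists t, I t /\ x + d <= t /\ v = f t).

Definition ftilde (I : R -> Prop) (d : R) (f : R -> R) (x : R) : R :=
  real (Rbar_min (Finite (f x)) (tail_inf I d f x)).

(* Main.v *)
Require Import Defs.
From Stdlib Require Import Reals Lra.
From Coquelicot Require Import Coquelicot.
Open Scope R_scope.

Lemma key (d : R) (I : R -> Prop) (f : R -> R) (hbdd : bounded_below_on I f) x :
  I x ->
  ftilde I d f x <= f x /\
  (forall t, I t -> x + d <= t -> ftilde I d f x <= f t) /\
  (forall c, c <= f x -> (forall t, I t -> x + d <= t -> c <= f t) -> c <= ftilde I d f x).
Proof.
  intros hx. destruct hbdd as [m hm].
  unfold ftilde, tail_inf.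
  set (E := fun v => exists t, I t /\ x + d <= t /\ v = f t).
  destruct (Glb_Rbar_correct E) as [Hlb Hgl].
  assert (HmT : Rbar_le m (Glb_Rbar E)).
  { apply Hgl. intros v [t [Ht [_ ->]]]. simpl. apply hm; auto. }
  assert (Hlb' : forall t, I t -> x + d <= t -> Rbar_le (Glb_Rbar E) (f t)).
  { intros t Ht Hxt. apply Hlb. exists t; auto. }
  assert (Hgl' : forall c, (forall t, I t -> x + d <= t -> c <= f t) -> Rbar_le c (Glb_Rbar E)).
  { intros c Hc. apply Hgl. intros v [t [Ht [Hxt ->]]]. simpl. auto. }
  destruct (Glb_Rbar E) as [r| |] eqn:HT; simpl in *.
  - split; [apply Rmin_l|split].
    + intros t Ht Hxt. specialize (Hlb' t Ht Hxt). simpl in Hlb'.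
      apply Rle_trans with r; [apply Rmin_r|exact Hlb'].
    + intros c Hc1 Hc2. specialize (Hgl' c Hc2). simpl in Hgl'. apply Rmin_glb; auto.
  - unfold Rbar_min. destruct (Rbar_le_dec (f x) p_infty) as [Hle|Hle]; simpl in *.
    + split; [lra|split].
      * intros t Ht Hxt. specialize (Hlb' t Ht Hxt). simpl in Hlb'. contradiction.
      * intros c Hc _. exact Hc.
    + exfalso. apply Hle. simpl. exact Logic.I.
  - contradiction.
Qed.

Theorem theorem3p2 (d : R) (I : R -> Prop) (f : R -> R)
  (hd : 0 < d) (hI : is_interval I) (hne : nondegenerate I)
  (hlen : length_ge I d) (hbdd : bounded_below_on I f) :
  (forall x, I x -> ftilde I d f x <= f x) /\
  d_periodically_increasing I d (ftilde I d f) /\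
  (forall g : R -> R, d_periodically_increasing I d g ->
     (forall x, I x -> g x <= f x) ->
     forall x, I x -> g x <= ftilde I d f x).
Proof.
  split; [|split].
  - intros x hx. exact (proj1 (key d I f hbdd x hx)).
  - intros x y hx hy hxy.
    destruct (key d I f hbdd x hx) as [_ [Bx _]].
    destruct (key d I f hbdd y hy) as [_ [_ Cy]].
    apply Cy.
    + apply Bx; auto; lra.
    + intros t ht hyt. apply Bx; auto; lra.
  - intros g hg hgf x hx.
    destruct (key d I f hbdd x hx) as [_ [_ Cx]].
    apply Cx; auto.
    intros t ht hxt. apply Rle_trans with (g t); auto.
    apply hg; auto; lra.
Qed.
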